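(* Let $(V,\|\cdot\|_V)$ be a normed vector space, $\mathcal{F},\Theta$ compact topological spaces with topologies generated by (pseudo-)metrics, and $E\colon V\times\mathcal{F}\times\Theta\to\mathbb{R}$ satisfying (EC) [for each $v$, $E(v,\cdot,\cdot)$ is continuous on $\mathcal{F}\times\Theta$] and (Lip) [for some $L\ge0$, each $E(\cdot,f,\theta)$ is $L$-Lipschitz on $V$]. Let $\bar v\in V$, $U\subseteq V$ convex, and $T_{\bar v}U:=\mathrm{cl}\{(v-\bar v)/t:t>0,v\in U\}$. Assume (Lin) for each $(f,\theta)$ the map $\Delta_{\bar v}E(\cdot,f,\theta)\colon V\to\mathbb{R}$, $v\mapsto E(\bar v+v,f,\theta)-E(\bar v,f,\theta)$, is linear; (DC) for each $h\in T_{\bar v}U$, the function $\theta\mapsto\sup_{f\in S(\bar v,\theta)}\Delta_{\bar v}E(h,f,\theta)$ is lower semi-continuous on $\Theta$. Then $\Psi\colon V\to C(\Theta)$, $\Psi(v)=(\sup_{f\in\mathcal{F}}E(v,f,\theta))_{\theta\in\Theta}$, is Hadamard directionally differentiable at $\bar v$ tangentially to $U$, with derivative $$D^H_{\bar v}\Psi\colon T_{\bar v}U\to C(\Theta),\quad h\mapsto\Big(\sup_{f\in S(\bar v,\theta)}\Delta_{\bar v}E(h,f,\theta)\Big)_{\theta\in\Theta},$$ i.e., for all $t_n\searrow0$ and $h_n\to h\in T_{\bar v}U$ with $\bar v+t_nh_n\in U$, $\|(\Psi(\bar v+t_nh_n)-\Psi(\bar v))/t_n-D^H_{\bar v}\P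si(h)\|_{C(\Theta)}\to0$.
   Context: $S(\bar v,\theta):=\{f\in\mathcal{F}:E(\bar v,f,\theta)=\sup_{f'\in\mathcal{F}}E(\bar v,f',\theta)\}$. $C(\Theta)$: bounded continuous real functions on $\Theta$ with uniform norm; $\mathrm{cl}$ denotes closure in $V$. *)

(* Defs.v *)
From HB Require Import structures.
From mathcomp Require Import all_boot all_order all_algebra.
From mathcomp Require Import all_classical all_reals all_analysis.
Set Implicit Arguments. Unset Strict Implicit. Unset Printing Implicit Defensive.
Import Order.TTheory GRing.Theory Num.Theory.
Import numFieldNormedType.Exports.
Local Open Scope classical_set_scope.
Local Open Scope ring_scope.

Definition rsup {R : realType} {T : Type} (A : set T) (g : T -> R) : R :=
  sup [set g x | x in A].

Definition unorm {R : realType} {T : Type} (g : T -> R) : R :=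
  rsup [set: T] (fun x => `|g x|).

Definition lsc {R : realType} {T : topologicalType} (g : T -> R) : Prop :=
  forall x (e : R), 0 < e -> \forall y \near x, g x - e < g y.

Definition PsiE {R : realType} {V F Th : Type} (E : V -> F -> Th -> R)
  (v : V) (th : Th) : R := rsup [set: F] (fun f => E v f th).

Definition Smax {R : realType} {V F Th : Type} (E : V -> F -> Th -> R)
  (v : V) (th : Th) : set F := [set f | E v f th = PsiE E v th].

Definition DeltaE {R : realType} {V : normedModType R} {F Th : Type}
  (E : V -> F -> Th -> R) (vbar h : V) (f : F) (th : Th) : R :=
  E (vbar + h) f th - E vbar f th.

Definition tcone {R : realType} {V : normedModType R} (vbar : V) (U : set V)
  : set V :=
  closure [set t^-1 *: (v - vbar) | t in [set t : R | 0 < t] & v in U].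

Definition DPsi {R : realType} {V : normedModType R} {F Th : Type}
  (E : V -> F -> Th -> R) (vbar h : V) (th : Th) : R :=
  rsup (Smax E vbar th) (fun f => DeltaE E vbar h f th).

(* Main.v *)
Require Import Defs.
From HB Require Import structures.
From mathcomp Require Import all_boot all_order all_algebra.
From mathcomp Require Import all_classical all_reals all_analysis.
From mathcomp Require Import ring lra.
Import Order.TTheory GRing.Theory Num.Theory.
Import numFieldNormedType.Exports.
Local Open Scope classical_set_scope.
Local Open Scope ring_scope.

Section rsupL.
Context {R : realType} {T : Type}.

Lemma rsup_ge (A : set T) (g : T -> R) M x :
  (forall y, A y -> g y <= M) -> A x -> g x <= rsup A g.
Proof.
move=> hM Ax; apply: sup_upper_bound; last by exists x.
split; first by exists (g x), x.
by exists M => _ [y Ay <-]; exact: hM.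
Qed.

Lemma rsup_le (A : set T) (g : T -> R) M :
  A !=set0 -> (forall y, A y -> g y <= M) -> rsup A g <= M.
Proof.
move=> [x Ax] hM; apply: ge_sup; first by exists (g x), x.
by move=> _ [y Ay <-]; exact: hM.
Qed.

Lemma rsup_max (A : set T) (g : T -> R) x :
  A x -> (forall y, A y -> g y <= g x) -> rsup A g = g x.
Proof.
move=> Ax hM; apply/le_anti/andP; split; first by apply: rsup_le => //; exists x.
exact: (@rsup_ge A g (g x) x hM Ax).
Qed.

Lemma rsup0 (A : set T) (g : T -> R) : A = set0 -> rsup A g = 0.
Proof. by move=> ->; rewrite /rsup image_set0 sup0. Qed.
End rsupL.


Section Joint.
Context {R : realType} {F Th : topologicalType}.
Variable G : F -> Th -> R.
Hypothesis cF : compact [set: F].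
Hypothesis GC : continuous (fun p : F * Th => G p.1 p.2).

Lemma contf th : continuous (fun f => G f th).
Proof.
move=> f0 A /= hA; have := GC (f0, th) A hA.
move=> [[A1 A2] /= [nA1 nA2] sub]; apply: filterS nA1 => f A1f.
exact: (sub (f, th) (conj A1f (nbhs_singleton nA2))).
Qed.

Lemma contth f : continuous (fun th => G f th).
Proof.
move=> t0 A /= hA; have := GC (f, t0) A hA.
move=> [[A1 A2] /= [nA1 nA2] sub]; apply: filterS nA2 => t A2t.
exact: (sub (f, t) (conj (nbhs_singleton nA1) A2t)).
Qed.

Lemma maxG (f0 : F) th : exists c, forall f, G f th <= G c th.
Proof.
have [c _ hc] := @compact_EVT_max F R (fun f => G f th) [set: F]
  (ex_intro _ f0 I) cF (@continuous_subspaceT _ _ [set: F] _ (contf th)).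
by exists c => f; apply: hc; rewrite inE.
Qed.

Lemma tube th0 e : 0 < e ->
  \forall th \near th0, forall f, `|G f th - G f th0| < e.
Proof.
move=> e0.
have := (iffLR (compact_near_coveringP [set: F])) cF Th (nbhs th0)
  (fun th f => `|G f th - G f th0| < e) _.
move=> /(_ _) H.
have : \forall th \near th0, [set: F] `<=` (fun f => `|G f th - G f th0| < e).
  apply: H => f0 _.
  have e20 : 0 < e / 2 by rewrite divr_gt0.
  have := GC (f0, th0).
  move=> /cvgrPdist_lt /(_ _ e20) [[A1 A2] /= [nA1 nA2] sub].
  exists (A1, A2) => //= -[f t] /= [A1f A2t].
  have h1 := sub (f, t) (conj A1f A2t).
  have h2 := sub (f, th0) (conj A1f (nbhs_singleton nA2)).
  move: h1 h2 => /= h1 h2.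
  rewrite (_ : G f t - G f th0 = (G f0 th0 - G f th0) - (G f0 th0 - G f t)); last by ring.
  apply: (le_lt_trans (ler_normB _ _)).
  by rewrite (splitr e) ltrD.
by apply: filterS => t hs f; apply: hs.
Qed.
End Joint.


Section Ps.
Context {R : realType} {F Th : topologicalType}.
Variable G : F -> Th -> R.
Hypothesis cF : compact [set: F].
Hypothesis GC : continuous (fun p : F * Th => G p.1 p.2).
Variable f0 : F.

Definition Ps th := rsup [set: F] (fun f => G f th).

Lemma Ps_eq th : exists c, Ps th = G c th /\ forall f, G f th <= G c th.
Proof.
have [c hc] := maxG G cF GC f0 th; exists c; split => //.
by apply: rsup_max.
Qed.

Lemma Ps_ge f th : G f th <= Ps th.
Proof. by have [c [-> hc]] := Ps_eq th. Qed.

Lemma Ps_cont : continuous Ps.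
Proof.
move=> th0; apply/cvgrPdist_lt => e e0.
have e20 : 0 < e / 2 by rewrite divr_gt0.
have := tube G cF GC th0 (e / 2) e20; apply: filterS => th hs.
have [c [-> hc]] := Ps_eq th; have [c0 [-> hc0]] := Ps_eq th0.
have h1 := hs c; have h2 := hs c0; have h3 := hc c0; have h4 := hc0 c.
move: h1 h2; rewrite !ltr_norml => /andP[h1 h1'] /andP[h2 h2'].
apply/andP; split; lra.
Qed.
End Ps.


Section Dp.
Context {R : realType} {F Th : topologicalType}.
Variables (G D : F -> Th -> R).
Hypothesis cF : compact [set: F].
Hypothesis GC : continuous (fun p : F * Th => G p.1 p.2).
Hypothesis DC : continuous (fun p : F * Th => D p.1 p.2).
Variable B : R.
Hypothesis DB : forall f th, `|D f th| <= B.
Variable f0 : F.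

Definition Sm th := [set f | G f th = Ps G th].
Definition Dp th := rsup (Sm th) (fun f => D f th).

Lemma Sm_ne th : Sm th !=set0.
Proof. by have [c [hc _]] := Ps_eq G cF GC f0 th; exists c; rewrite /Sm /= hc. Qed.

Lemma Dp_ge f th : Sm th f -> D f th <= Dp th.
Proof.
move=> hf; apply: (@rsup_ge _ _ (Sm th) (fun f => D f th) B f) => //.
by move=> y _; exact: le_trans (ler_norm _) (DB _ _).
Qed.

Lemma Dp_le th M : (forall f, Sm th f -> D f th <= M) -> Dp th <= M.
Proof. by move=> hM; apply: rsup_le => //; exact: Sm_ne. Qed.

Lemma localK th0 e : 0 < e ->
  \forall p \near ((th0, 0) : Th * R), forall f,
     Ps G p.1 - `|p.2| <= G f p.1 -> D f p.1 < Dp th0 + e.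
Proof.
move=> e0.
have := (iffLR (compact_near_coveringP [set: F])) cF (Th * R)%type
  (nbhs ((th0, 0) : Th * R))
  (fun p f => Ps G p.1 - `|p.2| <= G f p.1 -> D f p.1 < Dp th0 + e) _.
move=> /(_ _) H.
have : \forall p \near ((th0, 0) : Th * R), [set: F] `<=`
  (fun f => Ps G p.1 - `|p.2| <= G f p.1 -> D f p.1 < Dp th0 + e).
  apply: H => f1 _.
  have [hS|hS] := eqVneq (G f1 th0) (Ps G th0).
    have hD : D f1 th0 <= Dp th0 by apply: Dp_ge.
    have := DC (f1, th0).
    move=> /cvgrPdist_lt /(_ e e0) [[A1 A2] /= [nA1 nA2] sub].
    exists (A1, A2 `*` setT) => /=.
      split => //; exists (A2, setT) => //=; split => //; exact: filterT.
    move=> [f [th d]] /= [A1f [A2th _]] _.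
    have := sub (f, th) (conj A1f A2th) => /=.
    rewrite ltr_norml => /andP[h1 h2]; lra.
  have hlt : G f1 th0 < Ps G th0 by rewrite lt_neqAle hS Ps_ge.
  set g := Ps G th0 - G f1 th0.
  have g3 : 0 < g / 3 by rewrite divr_gt0 // subr_gt0.
  have := GC (f1, th0).
  move=> /cvgrPdist_lt /(_ _ g3) [[B1 B2] /= [nB1 nB2] subG].
  have := Ps_cont G cF GC f0 th0.
  move=> /cvgrPdist_lt /(_ _ g3) nC.
  have nD : \forall d \near (0 : R), `|d| < g / 3.
    by apply/nbhs_norm0P; exists (g / 3) => // d /=.
  exists (B1, (B2 `&` [set th | `|Ps G th0 - Ps G th| < g / 3]) `*`
             [set d | `|d| < g / 3]) => /=.
    split => //; exists (B2 `&` [set th | `|Ps G th0 - Ps G th| < g / 3],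
             [set d : R | `|d| < g / 3]) => //=.
    split => //; exact: filterI.
  move=> [f [th d]] /= [B1f [[B2th hC] hd]] hp.
  have := subG (f, th) (conj B1f B2th) => /=.
  move: hC; rewrite !ltr_norml => /andP[h1 h2] /andP[h3 h4].
  exfalso; rewrite /g in h1 h2 h3 h4 hd; lra.
by apply: filterS => p hs f; apply: hs.
Qed.

Lemma Dp_usc th0 e : 0 < e -> \forall th \near th0, Dp th <= Dp th0 + e.
Proof.
move=> e0; have := localK th0 e e0.
move=> [[A1 A2] /= [nA1 nA2] sub].
apply: filterS nA1 => th A1th.
apply: Dp_le => f hf; apply: ltW.
apply: (sub (th, 0)); first by split => //; exact: nbhs_singleton nA2.
by rewrite /= normr0 subr0 hf.
Qed.

Lemma Dp_cont : lsc Dp -> continuous Dp.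
Proof.
move=> hl th0; apply/cvgrPdist_lt => e e0.
have e20 : 0 < e / 2 by rewrite divr_gt0.
move: (Dp_usc th0 (e / 2) e20) (hl th0 e e0).
apply: filterS2 => th h1 h2.
rewrite ltr_norml; apply/andP; split; lra.
Qed.

Hypothesis cT : compact [set: Th].

Lemma Kglob : lsc Dp -> forall e, 0 < e -> exists2 d, 0 < d &
  forall th f, Ps G th - d <= G f th -> D f th < Dp th + e.
Proof.
move=> hl e e0.
have e20 : 0 < e / 2 by rewrite divr_gt0.
have := (iffLR (compact_near_coveringP [set: Th])) cT R (nbhs (0 : R))
  (fun d th => forall f, Ps G th - `|d| <= G f th -> D f th < Dp th + e) _.
move=> /(_ _) H.
have : \forall d \near (0 : R), [set: Th] `<=`
  (fun th => forall f, Ps G th - `|d| <= G f th -> D f th < Dp th + e).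
  apply: H => th0 _.
  have := localK th0 (e / 2) e20 => -[[A1 A2] /= [nA1 nA2] sub].
  exists (A1 `&` [set th | Dp th0 - e / 2 < Dp th], A2) => /=.
    split => //; exact: filterI (hl th0 _ e20).
  move=> [th d] /= [[A1th hth] A2d] f hp.
  have := sub (th, d) (conj A1th A2d) f hp => /=; lra.
move=> /nbhs_norm0P [r r0 hr].
exists (r / 2); first by rewrite divr_gt0.
move=> th f hp; apply: (hr (r / 2)) => //=.
  by rewrite ger0_norm ?divr_ge0 ?ltW // ltr_pdivrMr // ltr_pMr // ltr1n.
by rewrite ger0_norm // divr_ge0 // ltW.
Qed.
End Dp.


Lemma unorm_bound {R : realType} {T : Type} (g : T -> R) e : 0 <= e ->
  (forall x, `|g x| <= e) -> `|0 - unorm g| <= e.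
Proof.
move=> e0 hg; rewrite sub0r normrN.
case: (pselect (exists x : T, True)) => [[x _]|nx].
  have h1 : unorm g <= e by apply: rsup_le => //; exists x.
  have h2 : `|g x| <= unorm g.
    exact: (@rsup_ge _ _ [set: T] (fun x => `|g x|) e x (fun y _ => hg y)).
  by rewrite ger0_norm // (le_trans _ h2).
rewrite /unorm rsup0 ?normr0 //.
by apply/seteqP; split => // y _; apply: nx; exists y.
Qed.

Section Main.
Context {R : realType} {V : normedModType R} {F Th : pseudoMetricType R}.
Variable E : V -> F -> Th -> R.
Variable vbar : V.
Hypothesis cF : compact [set: F].
Hypothesis EC : forall v, continuous (fun p : F * Th => E v p.1 p.2).
Variable L : R.
Hypothesis L0 : 0 <= L.
Hypothesis Lip : forall f th v w, `|E v f th - E w f th| <= L * `|v - w|.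
Hypothesis Lin : forall f th (a : R) (u w : V),
     DeltaE E vbar (a *: u + w) f th
     = a * DeltaE E vbar u f th + DeltaE E vbar w f th.
Variable f0 : F.

Lemma DeltaB u f th : `|DeltaE E vbar u f th| <= L * `|u|.
Proof. have := Lip f th (vbar + u) vbar; rewrite (_ : vbar + u - vbar = u) ?/DeltaE; [exact| by rewrite addrC addKr]. Qed.

Lemma DeltaC u : continuous (fun p : F * Th => DeltaE E vbar u p.1 p.2).
Proof. by move=> p; apply: cvgB; [exact: EC | exact: EC]. Qed.

Lemma Delta0 f th : DeltaE E vbar 0 f th = 0.
Proof. by rewrite /DeltaE addr0 subrr. Qed.

Lemma DeltaZ a u f th : DeltaE E vbar (a *: u) f th = a * DeltaE E vbar u f th.
Proof. by have := Lin f th a u 0; rewrite addr0 Delta0 addr0. Qed.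

Lemma DeltaD u w f th :
  DeltaE E vbar (u + w) f th = DeltaE E vbar u f th + DeltaE E vbar w f th.
Proof. by have := Lin f th 1 u w; rewrite scale1r mul1r. Qed.

Lemma Esplit t u f th :
  E (vbar + t *: u) f th = E vbar f th + t * DeltaE E vbar u f th.
Proof. rewrite -DeltaZ /DeltaE; ring. Qed.

Lemma DPsiE h th : DPsi E vbar h th = Dp (E vbar) (DeltaE E vbar h) th.
Proof. by []. Qed.

Lemma PsiEE v th : PsiE E v th = Ps (E v) th.
Proof. by []. Qed.

Lemma lowerQ t hn h th : 0 < t ->
  DPsi E vbar h th - L * `|hn - h|
  <= (PsiE E (vbar + t *: hn) th - PsiE E vbar th) / t.
Proof.
move=> t0.
set q := (PsiE E (vbar + t *: hn) th - PsiE E vbar th) / t.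
have hq : q * t = PsiE E (vbar + t *: hn) th - PsiE E vbar th.
  by rewrite /q divfK // gt_eqF.
suff : DPsi E vbar h th <= q + L * `|hn - h| by lra.
rewrite DPsiE; apply: (Dp_le (E vbar) (DeltaE E vbar h) cF (EC vbar) f0) => f hf.
have h1 := Ps_ge (E (vbar + t *: hn)) cF (EC _) f0 f th.
rewrite Esplit in h1.
have h2 := DeltaB (hn - h) f th.
have h3 : DeltaE E vbar hn f th = DeltaE E vbar h f th + DeltaE E vbar (hn - h) f th.
  by rewrite -DeltaD addrC subrK.
move: hf; rewrite /Sm /= => hf.
rewrite !PsiEE -hf in hq.
move: h2; rewrite ler_norml => /andP[h2 h2'].
rewrite h3 in h1.
set a := DeltaE E vbar h f th in h1 h3 *.
set b := DeltaE E vbar (hn - h) f th in h1 h2 h2' h3.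
set c := L * `|hn - h| in h2 h2' *.
nra.
Qed.

Lemma DPsi_lb h th : - (L * `|h|) <= DPsi E vbar h th.
Proof.
have [c hc] := Sm_ne (E vbar) cF (EC vbar) f0 th.
apply: le_trans (Dp_ge (E vbar) (DeltaE E vbar h) (L * `|h|) (@DeltaB h) c th hc).
by have := DeltaB h c th; rewrite ler_norml => /andP[].
Qed.

Lemma upperQ t hn h th e d : 0 < t -> 0 < e ->
  (forall th f, Ps (E vbar) th - d <= E vbar f th ->
     DeltaE E vbar h f th < DPsi E vbar h th + e) ->
  t * (L * (`|hn| + `|h|)) <= d ->
  (PsiE E (vbar + t *: hn) th - PsiE E vbar th) / t
  <= DPsi E vbar h th + e + L * `|hn - h|.
Proof.
move=> t0 e0 hK htd.
set q := (PsiE E (vbar + t *: hn) th - PsiE E vbar th) / t.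
have hq : q * t = PsiE E (vbar + t *: hn) th - PsiE E vbar th.
  by rewrite /q divfK // gt_eqF.
rewrite !PsiEE in hq.
have [c [hc _]] := Ps_eq (E (vbar + t *: hn)) cF (EC _) f0 th.
rewrite hc Esplit in hq.
have hlb := DPsi_lb h th.
have hPs := Ps_ge (E vbar) cF (EC _) f0 c th.
have hn0 : 0 <= L * `|hn - h| by rewrite mulr_ge0.
have [hle|hgt] := lerP (Ps (E vbar) th - d) (E vbar c th).
  have h1 := hK th c hle.
  have h2 := DeltaB (hn - h) c th.
  have h3 : DeltaE E vbar hn c th = DeltaE E vbar h c th + DeltaE E vbar (hn - h) c th.
    by rewrite -DeltaD addrC subrK.
  move: h2; rewrite ler_norml => /andP[h2 h2'].
  rewrite h3 in hq.
  set a := DeltaE E vbar h c th in h1 hq.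
  set b := DeltaE E vbar (hn - h) c th in hq h2 h2'.
  set m := L * `|hn - h| in hn0 h2 h2' *.
  set P0 := Ps (E vbar) th in hq hle hPs.
  set D0 := DPsi E vbar h th in h1 hlb *.
  nra.
have h2 := DeltaB hn c th.
move: h2; rewrite ler_norml => /andP[h2 h2'].
set b := DeltaE E vbar hn c th in hq h2 h2'.
set m := L * `|hn - h| in hn0 *.
set P0 := Ps (E vbar) th in hq hgt hPs.
set D0 := DPsi E vbar h th in hlb *.
have : t * b <= t * (L * `|hn|) by rewrite ler_pM2l.
move: htd; rewrite mulrDr mulrDr => htd hb.
have : t * (L * `|h|) >= 0 by rewrite !mulr_ge0 // ltW.
move=> hh.
have : q * t <= (D0 + e + m) * t.
  rewrite hq.
  have : - (t * (L * `|h|)) <= t * D0.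
    by rewrite -mulrN ler_pM2l.
  nra.
by rewrite ler_pM2r.
Qed.

Hypothesis cT : compact [set: Th].

Lemma hadamard (t : nat -> R) (hs : nat -> V) (h : V) :
  (forall n, 0 < t n) -> t n @[n --> \oo] --> 0 ->
  hs n @[n --> \oo] --> h -> lsc (DPsi E vbar h) ->
  unorm (fun th => (PsiE E (vbar + t n *: hs n) th - PsiE E vbar th) / t n
                   - DPsi E vbar h th) @[n --> \oo] --> 0.
Proof.
move=> t0 tc hc hl; apply/cvgrPdist_le => e e0.
have e20 : 0 < e / 2 by rewrite divr_gt0.
have [d d0 hK] := Kglob (E vbar) (DeltaE E vbar h) cF (EC vbar) (DeltaC h)
  (L * `|h|) (@DeltaB h) f0 cT hl (e / 2) e20.
have L1 : 0 < L + 1 by apply: (le_lt_trans L0); rewrite ltrDl ltr01.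
set eta := e / 2 / (L + 1).
have eta0 : 0 < eta by rewrite divr_gt0.
have Leta : L * eta <= e / 2.
  have -> : e / 2 = (L + 1) * eta by rewrite /eta [RHS]mulrC divfK // gt_eqF.
  by rewrite ler_pM2r //; lra.
set K := L * (2 * `|h| + 1) + 1.
have K0 : 0 < K by rewrite /K (lt_le_trans ltr01) // lerDr mulr_ge0 // addr_ge0 // mulr_ge0.
have dK0 : 0 < d / K by rewrite divr_gt0.
have /cvgrPdist_le /(_ eta eta0) N1 := hc.
have /cvgrPdist_le /(_ 1 ltr01) N2 := hc.
have /cvgrPdist_le /(_ (d / K) dK0) N3 := tc.
near=> n.
have h1 : `|h - hs n| <= eta by near: n; exact: N1.
have h2 : `|h - hs n| <= 1 by near: n; exact: N2.
have h3 : `|0 - t n| <= d / K by near: n; exact: N3.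
apply: unorm_bound; first exact: ltW.
move=> th.
set hn := hs n in h1 h2 *; set tn := t n in h3 *.
have tn0 : 0 < tn by exact: t0.
rewrite sub0r normrN ger0_norm in h3; last exact: ltW.
rewrite distrC in h1 h2.
have hnb : `|hn| <= `|h| + 1.
  have := ler_normD h (hn - h); rewrite (_ : h + (hn - h) = hn); last first.
    by rewrite addrC subrK.
  lra.
have hL1 : L * `|hn - h| <= e / 2.
  by apply: le_trans Leta; rewrite ler_wpM2l.
have htd : tn * (L * (`|hn| + `|h|)) <= d.
  have hk : tn * K <= d by rewrite -ler_pdivlMr.
  apply: le_trans hk; rewrite ler_pM2l // /K.
  have : L * (`|hn| + `|h|) <= L * (2 * `|h| + 1) by rewrite ler_wpM2l //; lra.
  lra.
have lo := lowerQ tn hn h th tn0.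
have up := upperQ tn hn h th (e / 2) d tn0 e20 hK htd.
have hn0 : 0 <= L * `|hn - h| by rewrite mulr_ge0.
rewrite ler_norml; apply/andP; split; lra.
Unshelve. all: end_near.
Qed.
End Main.


Theorem mainTheorem17 (R : realType) (V : normedModType R)
  (F Th : pseudoMetricType R) (E : V -> F -> Th -> R) (vbar : V) (U : set V) :
  compact [set: F] -> compact [set: Th] ->
  (* (EC) *)
  (forall v, continuous (fun p : F * Th => E v p.1 p.2)) ->
  (* (Lip) *)
  (exists L : R, 0 <= L /\
     forall f th v w, `|E v f th - E w f th| <= L * `|v - w|) ->
  convex_set U ->
  (* (Lin) *)
  (forall f th (a : R) (u w : V),
     DeltaE E vbar (a *: u + w) f th
     = a * DeltaE E vbar u f th + DeltaE E vbar w f th) ->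
  (* (DC) *)
  (forall h, tcone vbar U h -> lsc (DPsi E vbar h)) ->
  (* Psi maps into C(Theta), D^H Psi maps T_vbar U into C(Theta) *)
  (forall v, continuous (PsiE E v)) /\
  (forall h, tcone vbar U h -> continuous (DPsi E vbar h)) /\
  (* Hadamard directional differentiability tangentially to U *)
  (forall (t : nat -> R) (hs : nat -> V) (h : V),
     (forall n, 0 < t n) -> {homo t : m n / (m <= n)%N >-> n <= m} ->
     t n @[n --> \oo] --> 0 ->
     hs n @[n --> \oo] --> h -> tcone vbar U h ->
     (forall n, U (vbar + t n *: hs n)) ->
     unorm (fun th => (PsiE E (vbar + t n *: hs n) th - PsiE E vbar th) / t n
                      - DPsi E vbar h th) @[n --> \oo] --> 0).
Proof.
move=> cF cT EC [L [L0 Lip]] _ Lin DC.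
case: (pselect (exists f : F, True)) => [[f0 _]|nF].
  split; first by move=> v; exact: (Ps_cont (E v) cF (EC v) f0).
  split.
    move=> h hh.
    exact: (Dp_cont (E vbar) (DeltaE E vbar h) cF (EC vbar)
      (DeltaC E vbar EC h) (L * `|h|) (DeltaB E vbar L Lip h) f0 (DC h hh)).
  move=> t hs h t0 _ tc hc hh _.
  exact: (hadamard E vbar cF EC L L0 Lip Lin f0 cT t hs h t0 tc hc (DC h hh)).
have F0 : forall A : set F, A = set0.
  by move=> A; apply/seteqP; split => // y _; apply: nF; exists y.
have P0 : forall v, PsiE E v = fun _ => 0.
  by move=> v; apply: funext => th; rewrite /PsiE rsup0.
have D0 : forall h, DPsi E vbar h = fun _ => 0.
  by move=> h; apply: funext => th; rewrite /DPsi rsup0.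
split; first by move=> v; rewrite P0; exact: cst_continuous.
split; first by move=> h _; rewrite D0; exact: cst_continuous.
move=> t hs h _ _ _ _ _ _; rewrite D0.
apply/cvgrPdist_le => e e0; apply: nearW => n.
apply: unorm_bound; first exact: ltW.
by move=> th; rewrite !P0 subrr mul0r subr0 normr0 ltW.
Qed.
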